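(* For every integer $m\ge2$ and every $\alpha\in[0,1]$, no randomized social choice rule whose output distribution depends only on the plurality scores $(\mathrm{plu}(c))_{c\in C}$ has distortion smaller than $2+\alpha-2/m$ on $\alpha$-decisive metric spaces.
   Context: An election: voters $V=\{1,\dots,n\}$, a fixed finite set $C$ of $m$ candidates, a profile of linear orders over $C$; $\mathrm{top}(i)$ is $i$'s first choice; $\mathrm{plu}(c)=|\{i:\mathrm{top}(i)=c\}|$ (plurality score). A distance function $d$ on $V\cup C$ is nonnegative, symmetric and satisfies the triangle inequality (co-location allowed); consistent with the profile if $d(i,c)\le d(i,c')$ whenever $i$ ranks $c$ above $c'$; $\alpha$-decisive if $d(i,\mathrm{top}(i))\le\alpha\,d(i,c)$ for all $i$ and $c\ne\mathrm{top}(i)$. $\mathrm{SC}(c)=\sum_i d(i,c)$. A randomized rule maps profiles (any number of voters) to probability distributions over $C$; its distortion on $\alpha$-decisive spaces is $\sup_\sigma\sup_d\mathbb{E}[\mathrm{SC}(f(\sigma))]/\min_c\mathrm{SC}(c)$ over $\alpha$-decisive consistent $d$. *)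

(* Defs.v *)
From mathcomp Require Import all_boot all_order all_algebra all_fingroup.
Set Implicit Arguments. Unset Strict Implicit. Unset Printing Implicit Defensive.
Import Order.TTheory GRing.Theory Num.Theory.
Local Open Scope ring_scope.

(* A profile assigns to each voter a linear order over candidates, encoded
   as a rank permutation: voter i ranks c above c' iff rank i c < rank i c'
   (position 0 = first choice). *)
Definition profile (m n : nat) := 'I_n -> {perm 'I_m}.

Definition is_top (m n : nat) (p : profile m n) (i : 'I_n) (c : 'I_m) : bool :=
  [forall c' : 'I_m, (c' != c) ==> (p i c < p i c')%N].

Definition plu (m n : nat) (p : profile m n) (c : 'I_m) : nat :=
  #|[set i : 'I_n | is_top p i c]|.

Definition rule (R : Type) (m : nat) := forall n : nat, profile m n -> 'I_m -> R.

Definition is_distribution (R : numDomainType) (m : nat) (q : 'I_m -> R) :=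
  (forall c, 0 <= q c) /\ \sum_(c < m) q c = 1.

Definition is_randomized_rule (R : numDomainType) (m : nat) (f : rule R m) :=
  forall n (p : profile m n), is_distribution (f n p).

Definition plurality_based (R : Type) (m : nat) (f : rule R m) :=
  forall n n' (p : profile m n) (p' : profile m n'),
    (forall c, plu p c = plu p' c) -> f n p = f n' p'.

(* Points of the space V ∪ C: inl voter / inr candidate. *)
Definition pt (m n : nat) := ('I_n + 'I_m)%type.

(* distance function: nonnegative, symmetric, triangle inequality,
   d(x,x)=0; distinct points may be co-located (pseudometric). *)
Definition is_distance (R : numDomainType) (T : Type) (d : T -> T -> R) :=
  [/\ (forall x y, 0 <= d x y), (forall x, d x x = 0),
      (forall x y, d x y = d y x) & (forall x y z, d x z <= d x y + d y z)].

Definition consistent (R : numDomainType) (m n : nat) (p : profile m n)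
    (d : pt m n -> pt m n -> R) :=
  forall i c c', (p i c < p i c')%N -> d (inl i) (inr c) <= d (inl i) (inr c').

Definition decisive (R : numDomainType) (alpha : R) (m n : nat) (p : profile m n)
    (d : pt m n -> pt m n -> R) :=
  forall i c c', is_top p i c -> c' != c ->
    d (inl i) (inr c) <= alpha * d (inl i) (inr c').

Definition SC (R : numDomainType) (m n : nat) (d : pt m n -> pt m n -> R)
    (c : 'I_m) : R := \sum_(i < n) d (inl i) (inr c).

Definition expected_SC (R : numDomainType) (m n : nat) (q : 'I_m -> R)
    (d : pt m n -> pt m n -> R) : R := \sum_(c < m) q c * SC d c.

Definition distortion_at_least (R : numDomainType) (m : nat) (alpha : R)
    (f : rule R m) (X : R) :=
  forall r : R, r < X ->
    exists n (p : profile m n) (d : pt m n -> pt m n -> R) (copt : 'I_m),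
      [/\ is_distance d, consistent p d, decisive alpha p d,
          (forall c, SC d copt <= SC d c) &
          r * SC d copt < expected_SC (f n p) d].

(* Main.v *)
Require Import Defs.
From mathcomp Require Import all_boot all_order all_algebra all_fingroup.
From mathcomp Require Import ring lra.
Set Implicit Arguments. Unset Strict Implicit.
Import Order.TTheory GRing.Theory Num.Theory.
Local Open Scope ring_scope.

Definition rk (m : nat) (z0 z1 o i : 'I_m) : {perm 'I_m} :=
  if i == o then tperm i z0 else (tperm i z0 * tperm (tperm i z0 o) z1)%g.

Lemma tp_ne m (i z0 o : 'I_m) : o != i -> tperm i z0 o != z0.
Proof. by move=> h; rewrite -{2}(tpermL i z0) (inj_eq perm_inj). Qed.

Lemma rk_ii m (z0 z1 o i : 'I_m) : z0 != z1 -> rk z0 z1 o i i = z0.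
Proof.
move=> h01; rewrite /rk; case: eqP => hio; first by rewrite tpermL.
have hoi : o != i by apply/eqP => h; apply: hio.
rewrite permM tpermL (tpermD (tp_ne z0 hoi)) // eq_sym //.
Qed.

Lemma rk_io m (z0 z1 o i : 'I_m) : i != o -> rk z0 z1 o i o = z1.
Proof. by move=> h; rewrite /rk (negPf h) permM tpermL. Qed.

Lemma rk_eq m (z0 z1 o i c c' : 'I_m) : (rk z0 z1 o i c == rk z0 z1 o i c') = (c == c').
Proof. exact: (inj_eq perm_inj). Qed.

Lemma is_top_rk m (z0 z1 o i c : 'I_m) : z0 != z1 -> val z0 = 0%N ->
  is_top (fun j : 'I_m => rk z0 z1 o j) i c = (i == c).
Proof.
move=> h01 h0; apply/forallP/eqP => [H|<-].
  apply/eqP; apply/negP => /negP hic.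
  have := implyP (H i) hic.
  by rewrite rk_ii // h0.
move=> c'; apply/implyP => hc.
rewrite rk_ii // h0 lt0n; apply/negP => /eqP h.
have : rk z0 z1 o i c' == rk z0 z1 o i i by rewrite rk_ii // -val_eqE /= h h0.
by rewrite rk_eq (negPf hc).
Qed.

Lemma plu_rk m (z0 z1 o c : 'I_m) : z0 != z1 -> val z0 = 0%N ->
  plu (fun j : 'I_m => rk z0 z1 o j) c = 1%N.
Proof.
move=> h01 h0; rewrite /plu -(cards1 c); apply: eq_card => j.
by rewrite !inE is_top_rk.
Qed.

Definition hgt (R : numDomainType) (alpha : R) m (o : 'I_m) (x : pt m m) : R :=
  match x with inl i => if i == o then 0 else 1 | inr c => if c == o then 0 else 1 + alpha end.
Definition brn m (x : pt m m) : 'I_m := match x with inl i => i | inr c => c end.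
Definition dst (R : numDomainType) (alpha : R) m (o : 'I_m) (x y : pt m m) : R :=
  if brn x == brn y then `|hgt alpha o x - hgt alpha o y| else hgt alpha o x + hgt alpha o y.

Lemma abs_cases (R : realDomainType) (u : R) : (`|u| = u /\ 0 <= u) \/ (`|u| = - u /\ u <= 0).
Proof. case: (lerP 0 u) => h; [left; rewrite ger0_norm | right; rewrite ltr0_norm ?ltW]; by [].
Qed.

Lemma hgt_ge0 (R : realDomainType) (alpha : R) m (o : 'I_m) x : 0 <= alpha -> 0 <= hgt alpha o x.
Proof. by move=> ha; case: x => [i|c] /=; case: eqP => _ //; lra. Qed.

Lemma dst_ok (R : realDomainType) (alpha : R) m (o : 'I_m) : 0 <= alpha -> is_distance (dst alpha o).
Proof.
move=> ha; split.
- by move=> x y; rewrite /dst; case: eqP => _; rewrite ?normr_ge0 ?addr_ge0 ?hgt_ge0.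
- by move=> x; rewrite /dst eqxx subrr normr0.
- by move=> x y; rewrite /dst eq_sym; case: eqP => _; [exact: distrC | exact: addrC].
move=> x y z; rewrite /dst.
have hx := hgt_ge0 o x ha; have hy := hgt_ge0 o y ha; have hz := hgt_ge0 o z ha.
move: (hgt alpha o x) (hgt alpha o y) (hgt alpha o z) hx hy hz => a b c ha' hb hc.
case: (eqVneq (brn x) (brn y)) => exy; case: (eqVneq (brn y) (brn z)) => eyz;
  case: (eqVneq (brn x) (brn z)) => exz.
all: try (by move: exz; rewrite exy eyz eqxx).
all: try (by move: eyz; rewrite -exy exz eqxx).
all: try (by move: exy; rewrite exz -eyz eqxx).
all: repeat match goal with |- context[`|?u|] => case: (abs_cases u) => [[-> ?]|[-> ?]] end; lra.
Qed.

Lemma d_vc (R : realDomainType) (alpha : R) m (o i c : 'I_m) : 0 <= alpha ->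
  dst alpha o (inl i) (inr c) =
  if i == o then (if c == o then 0 else 1 + alpha)
  else if c == i then alpha else if c == o then 1 else 2 + alpha.
Proof.
move=> ha; rewrite /dst /=.
case: (eqVneq i o) => [hio|hio]; case: (eqVneq c o) => [hco|hco]; try subst i; try subst c.
- by rewrite ?eqxx subrr normr0.
- by rewrite eq_sym (negPf hco) add0r.
- by rewrite (negPf hio) eq_sym (negPf hio) addr0.
- case: (eqVneq i c) => [hic|hic]; first by subst c; rewrite ?eqxx distrC ger0_norm; lra.
  lra.
Qed.

Lemma rk0 m (z0 z1 o i c : 'I_m) : z0 != z1 -> val z0 = 0%N ->
  (c == i) = (nat_of_ord (rk z0 z1 o i c) == 0%N).
Proof. by move=> h01 h0; rewrite -(rk_eq z0 z1 o i c i) rk_ii // -val_eqE /= h0. Qed.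

Lemma rk1 m (z0 z1 o i c : 'I_m) : val z1 = 1%N -> i != o ->
  (c == o) = (nat_of_ord (rk z0 z1 o i c) == 1%N).
Proof. by move=> h1 hio; rewrite -(rk_eq z0 z1 o i c o) rk_io // -val_eqE /= h1. Qed.

Lemma cons_ok (R : realDomainType) (alpha : R) m (z0 z1 o : 'I_m) :
  0 <= alpha -> alpha <= 1 -> z0 != z1 -> val z0 = 0%N -> val z1 = 1%N ->
  consistent (fun j => rk z0 z1 o j) (dst alpha o).
Proof.
move=> ha ha1 h01 h0 h1 i c c' /=; rewrite !d_vc //.
case: (eqVneq i o) => [hio|hio].
  subst i; rewrite (@rk0 _ z0 z1 o o c h01 h0) (@rk0 _ z0 z1 o o c' h01 h0).
  move: (nat_of_ord (rk z0 z1 o o c)) (nat_of_ord (rk z0 z1 o o c')) => k k'.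
  by case: k => [|k]; case: k' => [|k'] //= _; lra.
rewrite (@rk0 _ z0 z1 o i c h01 h0) (@rk0 _ z0 z1 o i c' h01 h0).
rewrite (@rk1 _ z0 z1 o i c h1 hio) (@rk1 _ z0 z1 o i c' h1 hio).
move: (nat_of_ord (rk z0 z1 o i c)) (nat_of_ord (rk z0 z1 o i c')) => k k'.
by case: k => [|[|k]]; case: k' => [|[|k']] //= _; lra.
Qed.

Lemma dec_ok (R : realDomainType) (alpha : R) m (z0 z1 o : 'I_m) :
  0 <= alpha -> z0 != z1 -> val z0 = 0%N ->
  decisive alpha (fun j => rk z0 z1 o j) (dst alpha o).
Proof.
move=> ha h01 h0 i c c'; rewrite is_top_rk // => /eqP <- hc'.
rewrite !d_vc // eqxx.
case: (eqVneq i o) => [hio|hio].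
  by subst i; rewrite (negPf hc'); nra.
rewrite (negPf hc'); case: eqP => _; nra.
Qed.

Lemma ind_sum (R : numDomainType) m (c : 'I_m) : \sum_(i < m) ((i == c)%:R : R) = 1.
Proof. by rewrite (bigD1 c) //= eqxx big1 ?addr0 // => i /negPf ->. Qed.

Lemma SC_o (R : realDomainType) (alpha : R) m (o : 'I_m) : 0 <= alpha ->
  SC (dst alpha o) o = m%:R - 1.
Proof.
move=> ha; rewrite /SC.
transitivity (\sum_(i < m) (1 - ((i == o)%:R : R))).
  apply: eq_bigr => i _; rewrite d_vc //; case: (eqVneq i o) => [hio|hio] /=.
    by rewrite eqxx subrr.
  by rewrite eqxx subr0.
by rewrite sumrB ind_sum sumr_const card_ord.
Qed.

Lemma SC_c (R : realDomainType) (alpha : R) m (o c : 'I_m) : 0 <= alpha -> c != o ->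
  SC (dst alpha o) c = (2 + alpha) * m%:R - 3.
Proof.
move=> ha hco; rewrite /SC.
transitivity (\sum_(i < m) ((2 + alpha) - 2 * ((i == c)%:R : R) - ((i == o)%:R : R))).
  apply: eq_bigr => i _; rewrite d_vc // (negPf hco) [c == i]eq_sym.
  case: (eqVneq i o) => [hio|hio]; case: (eqVneq i c) => [hic|hic] /=.
  - by subst; rewrite eqxx in hco.
  - lra.
  - lra.
  - lra.
rewrite !sumrB -mulr_sumr !ind_sum sumr_const card_ord -mulr_natr; ring.
Qed.

Lemma exp_val (R : realDomainType) (alpha : R) m (o : 'I_m) (q : 'I_m -> R) :
  0 <= alpha -> \sum_(c < m) q c = 1 ->
  expected_SC q (dst alpha o) = q o * (m%:R - 1) + (1 - q o) * ((2 + alpha) * m%:R - 3).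
Proof.
move=> ha hs; rewrite /expected_SC (bigD1 o) //= SC_o //; congr (_ + _).
move: hs; rewrite (bigD1 o) //= => hs.
have -> : 1 - q o = \sum_(c < m | c != o) q c by rewrite -hs addrC addrK.
rewrite mulr_suml; apply: eq_bigr => c hc; by rewrite SC_c.
Qed.

Theorem theorem4 (R : realFieldType) (m : nat) (alpha : R) (f : rule R m) :
  (2 <= m)%N -> 0 <= alpha <= 1 ->
  is_randomized_rule f -> plurality_based f ->
  distortion_at_least alpha f (2 + alpha - 2 / m%:R).
Proof.
move=> hm /andP[ha0 ha1] hf hpb r hr.
pose z0 : 'I_m := Ordinal (ltnW hm).
pose z1 : 'I_m := Ordinal hm.
have h01 : z0 != z1 by rewrite -val_eqE.
have h0 : val z0 = 0%N by [].
have h1 : val z1 = 1%N by [].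
pose q := f m (fun j => rk z0 z1 z0 j).
have [q0 qs] := hf m (fun j => rk z0 z1 z0 j).
have hM : (2 : R) <= m%:R by rewrite (ler_nat R 2 m).
have [o ho] : exists o, q o * m%:R <= 1.
  case: (boolP [exists o, q o * m%:R <= 1]) => [/existsP //|/existsPn H].
  exfalso.
  have : \sum_(c < m) (1 : R) < \sum_(c < m) q c * m%:R.
    apply: ltr_sum; first by apply/hasP; exists z0; rewrite ?mem_index_enum.
    by move=> c _; have := H c; rewrite -ltNge.
  by rewrite -mulr_suml qs mul1r sumr_const card_ord ltxx.
pose p := fun j => rk z0 z1 o j.
have hq : f m p = q.
  by apply: hpb => c; rewrite /p !plu_rk.
exists m, p, (dst alpha o), o; split.
- exact: dst_ok.
- exact: cons_ok.
- exact: dec_ok.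
- move=> c; rewrite SC_o //; case: (eqVneq c o) => [->|hco]; first by rewrite SC_o.
  rewrite SC_c //; nra.
rewrite hq exp_val // SC_o //.
have hM0 : m%:R != 0 :> R by apply/eqP => h; rewrite h in hM; lra.
set M := (m%:R : R) in hM hM0 ho hr *; set w := M^-1.
have e : 2 / M = 2 * w by [].
rewrite e in hr.
have Mw : M * w = 1 by rewrite mulfV.
have hw : 0 < w by rewrite invr_gt0; lra.
have hqw : q o <= w.
  have : q o * M * w <= 1 * w by rewrite ler_pM2r.
  by rewrite -mulrA Mw mulr1 mul1r.
have h1' : 0 < (M - 1) * (2 + alpha - 2 * w - r) by apply: mulr_gt0; lra.
have h2' : 0 <= (w - q o) * (M + alpha * M - 2) by apply: mulr_ge0; nra.
have h3 : alpha * (M * w) = alpha by rewrite Mw mulr1.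
nra.
Qed.
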